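(* Let $f\in R=D[t;\sigma,\delta]$ be monic of degree $m\ge2$ and irreducible. (i) If $\sigma$ is surjective and $D=\mathrm{Nuc}_r(S_f)$, then $f$ is bounded and $S_f$ is a division algebra. (ii) If $f$ is bounded, then $S_f$ is a division algebra.
   Context: $D$ is an associative division ring, $\sigma$ a ring endomorphism of $D$, $\delta$ a left $\sigma$-derivation. $R=D[t;\sigma,\delta]$ is the skew polynomial ring with $ta=\sigma(a)t+\delta(a)$. For monic $f$ of degree $m$, $S_f$ is the set of polynomials of degree $<m$ with multiplication $g\circ h=$ remainder of $gh$ upon right division by $f$. $\mathrm{Nuc}_r(S_f)=\{x: (yz)x=y(zx)\ \forall y,z\in S_f\}$. $f$ is bounded if there exists $0\neq f^*\in R$ such that $Rf^*=f^*R$ is the largest two-sided ideal of $R$ contained in $Rf$. $f$ irreducible means it is not a unit and has no factorization $f=gh$ with $\deg g,\deg h<\deg f$. $S_f$ is a division algebra if left and right multiplication by every nonzero element are bijective. *)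

(* Defs.v *)
(* Carrier: {poly D} (coefficient sequences, a_0 + a_1 t + ... written on the left
   of powers of t); the skew multiplication is defined below. *)
From HB Require Import structures.
From mathcomp Require Import all_boot all_order all_algebra.
Set Implicit Arguments. Unset Strict Implicit. Unset Printing Implicit Defensive.
Import GRing.Theory.
Local Open Scope ring_scope.

Definition division_ring (D : unitRingType) : Prop :=
  forall x : D, x != 0 -> x \is a GRing.unit.

Definition left_sigma_derivation (D : nzRingType) (sigma : D -> D) (delta : {additive D -> D}) : Prop :=
  forall a b : D, delta (a * b) = sigma a * delta b + delta a * b.

Section SkewPoly.
Variables (D : nzRingType) (sigma : {rmorphism D -> D}) (delta : {additive D -> D}).

(* left multiplication by t : t * (sum c_k t^k) = sum (sigma c_k t^(k+1) + delta c_k t^k) *)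
Definition tmul (p : {poly D}) : {poly D} :=
  map_poly sigma p * 'X + map_poly delta p.

Definition smul (p q : {poly D}) : {poly D} :=
  \sum_(i < size p) (p`_i)%:P * iter i tmul q.

(* remainder of right division by f (f monic): g = q f + r, deg r < deg f *)
Fixpoint srem_rec (f : {poly D}) (n : nat) (g : {poly D}) : {poly D} :=
  match n with
  | 0 => g
  | n'.+1 => if (size g < size f)%N then g
             else srem_rec f n' (g - smul (lead_coef g *: 'X^(size g - size f)) f)
  end.

Definition srem (f g : {poly D}) : {poly D} := srem_rec f (size g) g.

Definition inSf (f g : {poly D}) : Prop := (size g < size f)%N.
Definition Sfmul (f g h : {poly D}) : {poly D} := srem f (smul g h).

Definition in_right_nucleus (f x : {poly D}) : Prop :=
  inSf f x /\ forall y z, inSf f y -> inSf f z ->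
    Sfmul f (Sfmul f y z) x = Sfmul f y (Sfmul f z x).

(* D = Nuc_r(S_f), D embedded as constant polynomials *)
Definition nucleus_is_D (f : {poly D}) : Prop :=
  forall x, in_right_nucleus f x <-> (size x <= 1)%N.

Definition Sf_division (f : {poly D}) : Prop :=
  forall a, inSf f a -> a != 0 ->
    (forall b, inSf f b -> exists! x, inSf f x /\ Sfmul f a x = b) /\
    (forall b, inSf f b -> exists! x, inSf f x /\ Sfmul f x a = b).

Definition sunit (f : {poly D}) : Prop :=
  exists g, smul f g = 1 /\ smul g f = 1.

Definition sirreducible (f : {poly D}) : Prop :=
  ~ sunit f /\ ~ exists g h, f = smul g h /\ (size g < size f)%N /\ (size h < size f)%N.

Definition two_sided_ideal (I : {poly D} -> Prop) : Prop :=
  I 0 /\ (forall a b, I a -> I b -> I (a + b)) /\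
  (forall r a, I a -> I (smul r a)) /\ (forall r a, I a -> I (smul a r)).

Definition lideal (g : {poly D}) : {poly D} -> Prop := fun p => exists h, p = smul h g.
Definition rideal (g : {poly D}) : {poly D} -> Prop := fun p => exists h, p = smul g h.

Definition sbounded (f : {poly D}) : Prop :=
  exists fs : {poly D}, fs != 0 /\
    (forall p, lideal fs p <-> rideal fs p) /\
    (forall p, lideal fs p -> lideal f p) /\
    (forall I, two_sided_ideal I -> (forall p, I p -> lideal f p) ->
               forall p, I p -> lideal fs p).

End SkewPoly.

(* Main.v *)
Require Import Defs.
From HB Require Import structures.
From mathcomp Require Import all_boot all_order all_algebra.
From Stdlib Require Import Classical.
From mathcomp Require Import zify.
Set Implicit Arguments. Unset Strict Implicit. Unset Printing Implicit Defensive.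
Import GRing.Theory.
Local Open Scope ring_scope.

Section Lin.
Variables (R0 : nzRingType) (V : zmodType) (sc : R0 -> V -> V).
Hypothesis scDr : forall a x y, sc a (x + y) = sc a x + sc a y.
Hypothesis scDl : forall a b x, sc (a + b) x = sc a x + sc b x.
Hypothesis scA : forall a b x, sc (a * b) x = sc a (sc b x).
Hypothesis sc1 : forall x, sc 1 x = x.
Variable U : V -> Prop.
Hypothesis U0 : U 0.
Hypothesis UB : forall x y, U x -> U y -> U (x - y).
Hypothesis UZ : forall a x, U x -> U (sc a x).
Hypothesis inv : forall a : R0, a != 0 -> exists b, b * a = 1 /\ a * b = 1.

Lemma idem0 (y : V) : y = y + y -> y = 0.
Proof. by move=> h; apply: (@addrI _ y); rewrite -h addr0. Qed.
Lemma sc0l x : sc 0 x = 0.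
Proof. by apply: idem0; rewrite -scDl addr0. Qed.
Lemma sc0r a : sc a 0 = 0.
Proof. by apply: idem0; rewrite -scDr addr0. Qed.
Lemma scNr a x : sc a (- x) = - sc a x.
Proof. by apply/eqP; rewrite -addr_eq0 -scDr addNr sc0r. Qed.
Lemma scNl a x : sc (- a) x = - sc a x.
Proof. by apply/eqP; rewrite -addr_eq0 -scDl addNr sc0l. Qed.
Lemma scBr a x y : sc a (x - y) = sc a x - sc a y.
Proof. by rewrite scDr scNr. Qed.
Lemma scBl a b x : sc (a - b) x = sc a x - sc b x.
Proof. by rewrite scDl scNl. Qed.
Lemma sc_sum a (I : Type) (s : seq I) (P : pred I) (F : I -> V) :
  sc a (\sum_(i <- s | P i) F i) = \sum_(i <- s | P i) sc a (F i).
Proof. exact: (big_morph _ (scDr a) (sc0r a)). Qed.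
Lemma UN x : U x -> U (- x).
Proof. by move=> h; rewrite -sub0r; apply: UB. Qed.
Lemma UD x y : U x -> U y -> U (x + y).
Proof. by move=> hx hy; rewrite -[y]opprK; apply: UB => //; apply: UN. Qed.
Lemma U_sum (I : Type) (s : seq I) (P : pred I) (F : I -> V) :
  (forall i, P i -> U (F i)) -> U (\sum_(i <- s | P i) F i).
Proof. by move=> H; apply: big_ind => //; exact: UD. Qed.

Definition inspan n (ws : 'I_n -> V) v := exists a : 'I_n -> R0, U (v - \sum_k sc (a k) (ws k)).

Lemma steinitz n (ws : 'I_n -> V) N (vs : 'I_N -> V) : (n < N)%N ->
  (forall i, inspan ws (vs i)) ->
  exists c : 'I_N -> R0, (exists i, c i != 0) /\ U (\sum_i sc (c i) (vs i)).
Proof.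
elim: n ws N vs => [|n IH] ws N vs hN hsp; have [a ha] := fin_all_exists hsp.
  pose i0 := Ordinal hN.
  exists (fun i => if i == i0 then 1 else 0); split; first by exists i0; rewrite eqxx oner_neq0.
  rewrite (bigD1 i0) //= sc1 big1 ?addr0.
    by have := ha i0; rewrite big_ord0 subr0.
  by move=> i /negbTE ->; rewrite sc0l.
case: (boolP [exists i, a i ord_max != 0]) => [/existsP [j hj]|hno].
  case: N vs hN hsp a ha j hj => // N' vs hN hsp a ha j hj.
  have [e [e1 e2]] := inv hj.
  pose lam i := a (lift j i) ord_max * e.
  pose vs' i := vs (lift j i) - sc (lam i) (vs j).
  have hsp' : forall i, inspan (fun k : 'I_n => ws (widen_ord (leqnSn n) k)) (vs' i).
    move=> i; exists (fun k => a (lift j i) (widen_ord (leqnSn n) k) - lam i * a j (widen_ord (leqnSn n) k)).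
    set S1 := \sum_(k < n.+1) sc (a (lift j i) k) (ws k).
    set S2 := \sum_(k < n.+1) sc (a j k) (ws k).
    have E : \sum_(k < n) sc (a (lift j i) (widen_ord (leqnSn n) k) - lam i * a j (widen_ord (leqnSn n) k)) (ws (widen_ord (leqnSn n) k)) = S1 - sc (lam i) S2.
      rewrite /S1 /S2 !big_ord_recr /= scDr sc_sum -scA /lam -mulrA e1 mulr1.
      rewrite opprD addrACA subrr addr0 -sumrB; apply: eq_bigr => k _.
      by rewrite scBl scA.
    rewrite E.
    have -> : vs' i - (S1 - sc (lam i) S2) = (vs (lift j i) - S1) - sc (lam i) (vs j - S2).
      rewrite /vs' scBr opprB opprB.
      by rewrite -!addrA; congr (_ + _); rewrite addrCA [in RHS]addrCA; congr (_ + _); exact: addrC.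
    by apply: UB; [exact: ha | apply: UZ; exact: ha].
  have hN' : (n < N')%N by apply: leq_trans (ltnSn n) _; rewrite -ltnS.
  have [c' [[i' hi'] hU]] := IH _ _ vs' hN' hsp'.
  exists (fun i => if unlift j i is Some k then c' k else - \sum_k c' k * lam k); split.
    by exists (lift j i'); rewrite liftK.
  rewrite (bigD1_ord j) //= unlift_none.
  have -> : \sum_(i < N') sc (if unlift j (lift j i) is Some k then c' k else - \sum_k c' k * lam k) (vs (lift j i))
          = \sum_(i < N') sc (c' i) (vs (lift j i)) by apply: eq_bigr => i _; rewrite liftK.
  suff -> : sc (- (\sum_k c' k * lam k)) (vs j) + \sum_(i < N') sc (c' i) (vs (lift j i))
          = \sum_(i < N') sc (c' i) (vs' i) by [].
  rewrite scNl.
  have -> : sc (\sum_k c' k * lam k) (vs j) = \sum_k sc (c' k * lam k) (vs j).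
    by rewrite (big_morph (fun b => sc b (vs j)) (fun b1 b2 => scDl b1 b2 (vs j)) (sc0l (vs j))).
  rewrite addrC -sumrB; apply: eq_bigr => k _.
  by rewrite /vs' scBr scA.
have hno' : forall i, a i ord_max = 0.
  by move=> i; apply/eqP; move: hno; rewrite negb_exists => /forallP /(_ i); rewrite negbK.
apply: (IH (fun k : 'I_n => ws (widen_ord (leqnSn n) k))); first by apply: ltnW.
move=> i; exists (fun k => a i (widen_ord (leqnSn n) k)).
by have := ha i; rewrite big_ord_recr /= hno' sc0l addr0.
Qed.

Variable phi : V -> V.
Hypothesis phiD : forall x y, phi (x + y) = phi x + phi y.
Hypothesis phiZ : forall a x, phi (sc a x) = sc a (phi x).
Hypothesis phiU : forall x, U (phi x) -> U x.

Lemma phi0 : phi 0 = 0.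
Proof. by apply: idem0; rewrite -phiD addr0. Qed.

Lemma phi_sum (I : Type) (s : seq I) (P : pred I) (F : I -> V) :
  phi (\sum_(i <- s | P i) F i) = \sum_(i <- s | P i) phi (F i).
Proof. exact: (big_morph _ phiD phi0). Qed.

Lemma inj_surj n (ws : 'I_n -> V) :
  (forall v, inspan ws v) ->
  (forall a : 'I_n -> R0, U (\sum_k sc (a k) (ws k)) -> forall k, a k = 0) ->
  forall w, exists v, U (phi v - w).
Proof.
move=> hsp hind w.
pose vs (i : 'I_n.+1) := if unlift ord_max i is Some k then phi (ws k) else w.
have [c [[i hi] hU]] := @steinitz n ws n.+1 vs (ltnSn n) (fun i => hsp (vs i)).
rewrite (bigD1_ord ord_max) //= /vs unlift_none in hU.
have E : \sum_(k < n) sc (c (lift ord_max k)) (if unlift ord_max (lift ord_max k) is Some k0 then phi (ws k0) else w)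
   = phi (\sum_(k < n) sc (c (lift ord_max k)) (ws k)).
  by rewrite phi_sum; apply: eq_bigr => k _; rewrite liftK phiZ.
rewrite E in hU.
have [cm|cm] := eqVneq (c ord_max) 0.
  rewrite cm sc0l add0r in hU.
  have := hind _ (phiU hU); move: hi; case: (unliftP ord_max i) => [k ->|->] hi; last by rewrite cm eqxx in hi.
  by move/(_ k)/eqP; rewrite (negbTE hi).
have [e [e1 e2]] := inv cm.
exists (- sc e (\sum_(k < n) sc (c (lift ord_max k)) (ws k))).
have := UN (UZ e hU); rewrite scDr -scA e1 sc1 -phiZ.
suff -> : phi (- sc e (\sum_(k < n) sc (c (lift ord_max k)) (ws k))) = - phi (sc e (\sum_(k < n) sc (c (lift ord_max k)) (ws k))).
  by rewrite opprD addrC.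
by apply/eqP; rewrite -addr_eq0 -phiD addNr phi0.
Qed.

End Lin.

Section Base.
Variables (D : unitRingType) (sigma : {rmorphism D -> D}) (delta : {additive D -> D}).
Hypothesis divD : division_ring D.
Hypothesis derD : left_sigma_derivation sigma delta.

Local Notation T := (tmul sigma delta).
Local Notation sm := (smul sigma delta).
Local Notation srem := (Defs.srem sigma delta).
Local Notation srem_rec := (Defs.srem_rec sigma delta).
Implicit Types p q r g h : {poly D}.

Lemma delta1 : delta 1 = 0.
Proof.
have := derD 1 1; rewrite mulr1 rmorph1 mul1r mulr1 => /eqP.
by rewrite -subr_eq0 opprD addrA subrr add0r oppr_eq0 => /eqP.
Qed.

Lemma coefT p k : (T p)`_k = (if k == 0%N then 0 else sigma p`_k.-1) + delta p`_k.
Proof. by rewrite /tmul coefD coefMX !coef_map. Qed.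

Lemma TD p q : T (p + q) = T p + T q.
Proof. by rewrite /tmul !raddfD /= mulrDl addrACA. Qed.

Lemma T0 : T 0 = 0.
Proof. by rewrite /tmul !raddf0 mul0r addr0. Qed.

Lemma TN p : T (- p) = - T p.
Proof. by apply/eqP; rewrite -addr_eq0 -TD addNr T0. Qed.

Lemma TB p q : T (p - q) = T p - T q.
Proof. by rewrite TD TN. Qed.

Lemma TZ c q : T (c *: q) = sigma c *: T q + delta c *: q.
Proof.
apply/polyP => k; rewrite coefT [RHS]coefD.
rewrite (coefZ (sigma c)) (coefZ (delta c)) coefT (coefZ c) (coefZ c) derD mulrDr addrA.
by case: (k == 0%N); rewrite ?mulr0 ?rmorphM.
 
Qed.

Lemma iterT_add i p q : iter i T (p + q) = iter i T p + iter i T q.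
Proof. by elim: i => //= i ->; rewrite TD. Qed.
Lemma iterT0 i : iter i T 0 = 0.
Proof. by elim: i => //= i ->; rewrite T0. Qed.
Lemma iterT_opp i p : iter i T (- p) = - iter i T p.
Proof. by elim: i => //= i ->; rewrite TN. Qed.

Lemma TXn n : T 'X^n = 'X^(n.+1).
Proof.
have d1 : forall b : bool, delta b%:R = 0 by case => /=; [exact: delta1 | exact: raddf0].
apply/polyP => k; rewrite coefT !coefXn d1 addr0.
case: k => [|k] //=; by rewrite rmorph_nat.
Qed.

Lemma iterTX n : iter n T 1 = 'X^n.
Proof. by elim: n => //= n ->; rewrite TXn. Qed.

Lemma smulE n p q : (size p <= n)%N -> sm p q = \sum_(i < n) p`_i *: iter i T q.
Proof.
move=> hn; rewrite /smul (big_ord_widen n (fun i => (p`_i)%:P * iter i T q)) //.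
rewrite big_mkcond /=; apply: eq_bigr => i _; rewrite mul_polyC.
by case: ifP => // /negbT; rewrite -leqNgt => /(nth_default 0) ->; rewrite scale0r.
Qed.

Lemma smulE' p q : sm p q = \sum_(i < size p) p`_i *: iter i T q.
Proof. exact: smulE. Qed.

Lemma smulDl p1 p2 q : sm (p1 + p2) q = sm p1 q + sm p2 q.
Proof.
set n := maxn (size p1) (size p2).
rewrite (@smulE n) ?(leq_trans (size_polyD _ _)) // (@smulE n p1) ?leq_maxl //.
rewrite (@smulE n p2) ?leq_maxr // -big_split /=.
by apply: eq_bigr => i _; rewrite coefD scalerDl.
Qed.

Lemma smulZl c p q : sm (c *: p) q = c *: sm p q.
Proof.
rewrite (@smulE (size p)) ?size_scale_leq // smulE' scaler_sumr.
by apply: eq_bigr => i _; rewrite coefZ scalerA.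
Qed.

Lemma smulDr p q1 q2 : sm p (q1 + q2) = sm p q1 + sm p q2.
Proof.
rewrite !smulE' -big_split /=; apply: eq_bigr => i _.
by rewrite iterT_add scalerDr.
Qed.

Lemma smul0l q : sm 0 q = 0.
Proof. by rewrite /smul size_poly0 big_ord0. Qed.

Lemma smul0r p : sm p 0 = 0.
Proof. by rewrite smulE' big1 // => i _; rewrite iterT0 scaler0. Qed.

Lemma smulNl p q : sm (- p) q = - sm p q.
Proof. by apply/eqP; rewrite -addr_eq0 -smulDl addNr smul0l. Qed.
Lemma smulNr p q : sm p (- q) = - sm p q.
Proof. by apply/eqP; rewrite -addr_eq0 -smulDr addNr smul0r. Qed.
Lemma smulBl p1 p2 q : sm (p1 - p2) q = sm p1 q - sm p2 q.
Proof. by rewrite smulDl smulNl. Qed.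
Lemma smulBr p q1 q2 : sm p (q1 - q2) = sm p q1 - sm p q2.
Proof. by rewrite smulDr smulNr. Qed.

Lemma smulCl c q : sm c%:P q = c *: q.
Proof.
rewrite (@smulE 1) ?size_polyC ?leq_b1 // big_ord1 /=.
by rewrite coefC.
Qed.

Lemma smul1l q : sm 1 q = q.
Proof. by rewrite smulCl scale1r. Qed.

Lemma smulr1 p : sm p 1 = p.
Proof.
rewrite smulE'; under eq_bigr do rewrite iterTX.
by rewrite -poly_def coefK.
Qed.

Lemma smulXnl n q : sm 'X^n q = iter n T q.
Proof.
rewrite smulE' size_polyXn (bigD1 ord_max) //= coefXn eqxx scale1r big1 ?addr0 //.
move=> i hi; rewrite coefXn.
have -> : (i == n :> nat) = false.
  by apply/negbTE; move: hi; apply: contra => /eqP h; apply/eqP/val_inj.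
by rewrite scale0r.
Qed.

Lemma T_sum (I : Type) (s : seq I) (P : pred I) (F : I -> {poly D}) :
  T (\sum_(i <- s | P i) F i) = \sum_(i <- s | P i) T (F i).
Proof. exact: (big_morph _ TD T0). Qed.

Lemma smulT g r : sm (T g) r = T (sm g r).
Proof.
set n := size g.
have hg : (size (T g) <= n.+1)%N.
  apply/leq_sizeP => j hj; rewrite coefT.
  rewrite [g`_j]nth_default ?raddf0 ?addr0; last by apply: leq_trans hj; rewrite leqnSn.
  case: j hj => //= j; rewrite ltnS => hj.
  by rewrite nth_default ?rmorph0.
rewrite (smulE r hg) smulE'.
under eq_bigr do rewrite coefT scalerDl.
rewrite big_split /= big_ord_recl /= (scale0r r) add0r big_ord_recr /=.
rewrite [g`_n]nth_default // raddf0 (scale0r (iter n T r)) addr0.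
rewrite T_sum -big_split; apply: eq_bigr => i _; rewrite TZ.
by rewrite add0n.
Qed.

Lemma smulA p q r : sm p (sm q r) = sm (sm p q) r.
Proof.
have key : forall i g, sm (iter i T g) r = iter i T (sm g r).
  by elim=> //= i IH g; rewrite smulT IH.
have sumL : forall (I : Type) (s : seq I) (P : pred I) (F : I -> {poly D}),
  sm (\sum_(i <- s | P i) F i) r = \sum_(i <- s | P i) sm (F i) r.
  move=> I s P F; apply: (big_morph (fun x => sm x r)); first by move=> x y; rewrite smulDl.
  exact: smul0l.
rewrite [sm p q]smulE' sumL smulE'; apply: eq_bigr => i _.
by rewrite smulZl key.
Qed.


Lemma mulD_neq0 (x y : D) : x != 0 -> y != 0 -> x * y != 0.
Proof.
move=> hx hy; apply: contra hy => /eqP h.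
by rewrite -(mulKr (divD hx) y) h mulr0.
Qed.

Lemma sigma_neq0 (x : D) : x != 0 -> sigma x != 0.
Proof.
move=> hx; have u : sigma x \is a GRing.unit by rewrite rmorph_unit // divD.
by apply: contraTneq u => ->; rewrite unitr0.
Qed.

Lemma iter_sigma_neq0 k (x : D) : x != 0 -> iter k sigma x != 0.
Proof. by move=> hx; elim: k => //= k IH; exact: sigma_neq0. Qed.

Lemma iter_sigma1 k : iter k sigma 1 = 1.
Proof. by elim: k => //= k ->; rewrite rmorph1. Qed.

Lemma size_lead p n : (size p <= n.+1)%N -> p`_n != 0 -> size p = n.+1 /\ lead_coef p = p`_n.
Proof.
move=> h1 h2.
have h3 : (n < size p)%N by rewrite ltnNge; apply: contra h2 => h; rewrite nth_default.
have e : size p = n.+1 by apply/eqP; rewrite eqn_leq h1 h3.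
by split; rewrite // /lead_coef e.
Qed.

Lemma size_sum_leq (I : Type) (s : seq I) (P : pred I) (F : I -> {poly D}) N :
  (forall i, P i -> (size (F i) <= N)%N) -> (size (\sum_(i <- s | P i) F i)%R <= N)%N.
Proof.
move=> H; apply: (big_ind (fun x : {poly D} => (size x <= N)%N)) => //; first by rewrite size_poly0.
by move=> x y hx hy; apply: leq_trans (size_polyD _ _) _; rewrite geq_max hx hy.
Qed.

Lemma size_T_leq p : (size (T p) <= (size p).+1)%N.
Proof.
apply/leq_sizeP => j hj; rewrite coefT.
rewrite [p`_j]nth_default ?raddf0 ?addr0; last by apply: leq_trans hj; rewrite leqnSn.
case: j hj => //= j; rewrite ltnS => hj.
by rewrite nth_default ?rmorph0.
Qed.

Lemma size_T p : p != 0 -> size (T p) = (size p).+1 /\ lead_coef (T p) = sigma (lead_coef p).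
Proof.
move=> hp.
have c : (T p)`_(size p) = sigma (lead_coef p).
  by rewrite coefT size_poly_eq0 (negbTE hp) /= [p`_(size p)]nth_default // raddf0 addr0.
have hc : (T p)`_(size p) != 0 by rewrite c; apply: sigma_neq0; rewrite lead_coef_eq0.
have [h1 h2] := @size_lead (T p) (size p) (size_T_leq p) hc.
by rewrite h1 h2 c.
Qed.

Lemma size_iterT i p : p != 0 -> size (iter i T p) = (size p + i)%N /\ lead_coef (iter i T p) = iter i sigma (lead_coef p).
Proof.
move=> hp; elim: i => [|i [IH1 IH2]] /=; first by rewrite addn0.
have hn : iter i T p != 0 by rewrite -size_poly_eq0 IH1 addn_eq0 size_poly_eq0 (negbTE hp).
by have [-> ->] := size_T hn; rewrite IH1 IH2 addnS.
Qed.

Lemma size_iterT_leq i p : (size (iter i T p) <= size p + i)%N.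
Proof.
have [->|hp] := eqVneq p 0; first by rewrite iterT0 size_poly0.
by rewrite (size_iterT i hp).1.
Qed.

Lemma size_scale_neq0 (c : D) p : c != 0 -> size (c *: p) = size p /\ lead_coef (c *: p) = c * lead_coef p.
Proof.
move=> hc; have [->|hp] := eqVneq p 0; first by rewrite scaler0 lead_coef0 mulr0.
have h := @size_lead (c *: p) (size p).-1.
rewrite prednK ?size_poly_gt0 // size_scale_leq in h.
have e : (c *: p)`_(size p).-1 = c * lead_coef p by rewrite coefZ.
rewrite e in h; have [] := h isT (mulD_neq0 hc _); first by rewrite lead_coef_eq0.
by move=> -> ->.
Qed.

Lemma size_smul p q : p != 0 -> q != 0 ->
  size (sm p q) = (size p + size q).-1 /\ lead_coef (sm p q) = lead_coef p * iter (size p).-1 sigma (lead_coef q).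
Proof.
move=> hp hq; rewrite smulE'.
set n := (size p).-1.
have sp : size p = n.+1 by rewrite prednK // size_poly_gt0.
have el : p`_n = lead_coef p by [].
rewrite sp big_ord_recr /= el.
have lp : lead_coef p != 0 by rewrite lead_coef_eq0.
have [s1 l1] := size_iterT n hq.
have [s2 l2] := size_scale_neq0 (iter n T q) lp.
have hsum : (size (\sum_(i < n) p`_i *: iter i T q)%R < size (lead_coef p *: iter n T q))%N.
  rewrite s2 s1; case: n {sp el s1 s2 l1 l2} => [|n]; first by rewrite big_ord0 size_poly0 addn0 size_poly_gt0.
  rewrite addnS ltnS; apply: size_sum_leq => i _; apply: leq_trans (size_scale_leq _ _) _.
  by apply: leq_trans (size_iterT_leq _ _) _; rewrite leq_add2l -ltnS.
rewrite addrC size_addl // lead_coefDl // s2 s1 l2 l1; split => //.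
by rewrite addnC.
Qed.


Lemma size_polyB p q : (size (p - q)%R <= maxn (size p) (size q))%N.
Proof. by apply: leq_trans (size_polyD _ _) _; rewrite size_polyN. Qed.

Lemma size_sub_lt g h : g != 0 -> size h = size g -> lead_coef h = lead_coef g ->
  (size (g - h)%R < size g)%N.
Proof.
move=> hg sh lh; have sg : size g = (size g).-1.+1 by rewrite prednK // size_poly_gt0.
rewrite [X in (_ < X)%N]sg ltnS; apply/leq_sizeP => j hj.
rewrite coefB; move: hj; rewrite leq_eqVlt => /orP [/eqP <-|hj].
  by rewrite -/(lead_coef g) -lh /lead_coef sh subrr.
have hj' : (size g <= j)%N by rewrite sg.
by rewrite !nth_default ?subrr // sh.
Qed.

Lemma smul_monic_lead c k f : f \is monic ->
  size (sm (c *: 'X^k) f) = (size f + k)%N /\ lead_coef (sm (c *: 'X^k) f) = c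
  \/ c = 0.
Proof.
move=> mf; have [->|hc] := eqVneq c 0; [by right | left].
have f0 : f != 0 by apply: monic_neq0.
rewrite smulZl smulXnl; have [s1 l1] := size_iterT k f0.
have [s2 l2] := size_scale_neq0 (iter k T f) hc.
by rewrite s2 l2 s1 l1 (eqP mf) iter_sigma1 mulr1.
Qed.

Lemma srem_rec_spec f : f \is monic -> forall n g, (size g < size f + n)%N ->
  exists q, g = sm q f + srem_rec f n g /\ (size (srem_rec f n g) < size f)%N.
Proof.
move=> mf; elim=> [|n IH] g hg /=.
  by exists 0; rewrite smul0l add0r; rewrite addn0 in hg.
case: ifP => hs; first by exists 0; rewrite smul0l add0r.
set k := (size g - size f)%N.
have g0 : g != 0.
  apply/eqP => e; move: hs; rewrite e size_poly0 lt0n size_poly_eq0.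
  by rewrite (monic_neq0 mf).
have lg : lead_coef g != 0 by rewrite lead_coef_eq0.
have [[s1 l1]|] := smul_monic_lead (lead_coef g) k mf; last by move/eqP; rewrite (negbTE lg).
have e1 : (size f + k = size g)%N by rewrite subnKC // leqNgt hs.
rewrite e1 in s1.
have hlt := size_sub_lt g0 s1 l1.
have hlt2 : (size (g - sm (lead_coef g *: 'X^k) f)%R < size f + n)%N.
  by apply: (leq_trans hlt); rewrite -ltnS -addnS.
have [q [eq hr]] := IH _ hlt2.
exists (q + lead_coef g *: 'X^k); split => //.
by rewrite smulDl addrAC -eq subrK.
Qed.

Lemma srem_spec f g : f \is monic ->
  exists q, g = sm q f + srem f g /\ (size (srem f g) < size f)%N.
Proof.
move=> mf; apply: srem_rec_spec => //.
by rewrite -{1}[size g]add0n ltn_add2r size_poly_gt0 monic_neq0.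
Qed.

Lemma srem_size f g : f \is monic -> (size (srem f g) < size f)%N.
Proof. by move=> mf; have [q []] := srem_spec g mf. Qed.

Lemma srem_unique f g q r : f \is monic -> g = sm q f + r -> (size r < size f)%N ->
  srem f g = r.
Proof.
move=> mf eg hr; have [q' [eg' hr']] := srem_spec g mf.
have e : sm (q - q') f = srem f g - r.
  rewrite smulBl; have -> : sm q f = g - r by rewrite eg addrK.
  have -> : sm q' f = g - srem f g by rewrite {1}eg' addrK.
  by rewrite opprB addrC addrA subrK.
have [e0|hq] := eqVneq (q - q') 0.
  by move: e; rewrite e0 smul0l => /eqP; rewrite eq_sym subr_eq0 => /eqP.
have f0 : f != 0 by apply: monic_neq0.
have [s _] := size_smul hq f0.
have : (size (srem f g - r)%R < size f)%N.
  by apply: leq_ltn_trans (size_polyB _ _) _; rewrite gtn_max hr hr'.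
rewrite -e s -subn1 -addnBAC ?size_poly_gt0 //.
by rewrite -[X in (_ < X)%N]add0n ltn_add2r ltnNge => /negP; case.
Qed.

Lemma srem_small f g : f \is monic -> (size g < size f)%N -> srem f g = g.
Proof. by move=> mf h; apply: (srem_unique (q := 0)) => //; rewrite smul0l add0r. Qed.

Lemma srem_addmul f g q : f \is monic -> srem f (sm q f + g) = srem f g.
Proof.
move=> mf; have [q' [e h]] := srem_spec g mf.
apply: (srem_unique (q := q + q')) => //.
by rewrite smulDl -addrA -e.
Qed.

Lemma srem_mul f q : f \is monic -> srem f (sm q f) = 0.
Proof.
move=> mf; rewrite -[sm q f]addr0 srem_addmul // srem_small //.
by rewrite size_poly0 size_poly_gt0 monic_neq0.
Qed.

Lemma sremD f g h : f \is monic -> srem f (g + h) = srem f g + srem f h.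
Proof.
move=> mf; have [q1 [e1 h1]] := srem_spec g mf; have [q2 [e2 h2]] := srem_spec h mf.
apply: (srem_unique (q := q1 + q2)) => //.
  by rewrite smulDl {1}e1 {1}e2 addrACA.
by apply: leq_ltn_trans (size_polyD _ _) _; rewrite gtn_max h1 h2.
Qed.

Lemma srem0 f : f \is monic -> srem f 0 = 0.
Proof. by move=> mf; rewrite srem_small // size_poly0 size_poly_gt0 monic_neq0. Qed.

Lemma sremN f g : f \is monic -> srem f (- g) = - srem f g.
Proof. by move=> mf; apply/eqP; rewrite -addr_eq0 -sremD // addNr srem0. Qed.

Lemma sremB f g h : f \is monic -> srem f (g - h) = srem f g - srem f h.
Proof. by move=> mf; rewrite sremD // sremN. Qed.

Lemma sremZ f c g : f \is monic -> srem f (c *: g) = c *: srem f g.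
Proof.
move=> mf; have [q [e h]] := srem_spec g mf.
apply: (srem_unique (q := c *: q)) => //.
  by rewrite smulZl {1}e scalerDr.
by apply: leq_ltn_trans (size_scale_leq _ _) h.
Qed.

Lemma srem_id f g : f \is monic -> srem f (srem f g) = srem f g.
Proof. by move=> mf; rewrite srem_small // srem_size. Qed.

Lemma srem_eq0P f g : f \is monic -> srem f g = 0 <-> exists h, g = sm h f.
Proof.
move=> mf; split.
  by move=> e; have [q [eq _]] := srem_spec g mf; exists q; rewrite eq e addr0.
by move=> [h ->]; rewrite srem_mul.
Qed.

Lemma srem_lmul f y z : f \is monic -> srem f (sm y (srem f z)) = srem f (sm y z).
Proof.
move=> mf; have [q [e _]] := srem_spec z mf.
have -> : sm y z = sm (sm y q) f + sm y (srem f z) by rewrite {1}e smulDr smulA.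
by rewrite srem_addmul.
Qed.

Lemma srem_sub_eq f g : f \is monic -> srem f (g - srem f g) = 0.
Proof. by move=> mf; rewrite sremB // srem_id // subrr. Qed.


Lemma inv_ex (a : D) : a != 0 -> exists b, b * a = 1 /\ a * b = 1.
Proof. by move=> h; exists a^-1; rewrite mulVr ?mulrV ?divD. Qed.

Lemma normalize p : p != 0 -> ((lead_coef p)^-1 *: p) \is monic /\ size ((lead_coef p)^-1 *: p) = size p.
Proof.
move=> hp; have lp : lead_coef p != 0 by rewrite lead_coef_eq0.
have li : (lead_coef p)^-1 != 0.
  by apply: contraTneq (divD lp) => h; rewrite -unitrV h unitr0.
have [s l] := size_scale_neq0 p li.
by rewrite monicE s l mulVr ?divD ?eqxx.
Qed.

Lemma minimal (P : {poly D} -> Prop) : P 0 -> (forall x y, P x -> P y -> P (x - y)) ->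
  (forall r x, P x -> P (sm r x)) -> forall y0, P y0 -> y0 != 0 ->
  exists g, [/\ g \is monic, P g, (size g <= size y0)%N & forall y, P y -> srem g y = 0].
Proof.
move=> P0 PB PM y0; have [n] := ubnP (size y0); elim: n y0 => // n IH y0 hs Py0 y00.
have [mg sg] := normalize y00.
set g0 := (lead_coef y0)^-1 *: y0 in mg sg *.
have Pg0 : P g0 by rewrite /g0 -smulCl; apply: PM.
case: (classic (forall y, P y -> srem g0 y = 0)) => H.
  by exists g0; split => //; rewrite sg.
have [y hy] := not_all_ex_not _ _ H.
have Py := not_imply_elim _ _ hy.
have hr0 := not_imply_elim2 _ _ hy.
have [q [eq hr]] := srem_spec y mg.
have Pr : P (srem g0 y).
  have -> : srem g0 y = y - sm q g0 by rewrite {2}eq addrC addKr.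
  by apply: PB => //; apply: PM.
have hrs : (size (srem g0 y) < n)%N by apply: leq_trans hr _; rewrite sg -ltnS.
have [g [mg' Pg sgs Hg]] := IH _ hrs Pr (introN eqP hr0).
exists g; split => //; apply: leq_trans sgs _; rewrite -sg; exact: ltnW.
Qed.

Lemma coef_sumXn n (c : 'I_n -> D) (i : 'I_n) : (\sum_(k < n) c k *: 'X^k)`_i = c i.
Proof.
rewrite coef_sum (bigD1 i) //= (coefZ (c i)) coefXn eqxx mulr1 big1 ?addr0 //.
move=> k hk; rewrite (coefZ (c k)) coefXn.
have -> : (i == k :> nat) = false by apply/negbTE; move: hk; apply: contra => /eqP h; apply/eqP/val_inj.
by rewrite mulr0.
Qed.

Lemma size_sumXn n (c : 'I_n -> D) : (size (\sum_(k < n) c k *: 'X^k)%R <= n)%N.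
Proof.
apply: size_sum_leq => k _; apply: leq_trans (size_scale_leq _ _) _.
by rewrite size_polyXn.
Qed.

Lemma sumXn_eq0 n (c : 'I_n -> D) : \sum_(k < n) c k *: 'X^k = 0 -> forall k, c k = 0.
Proof. by move=> h k; rewrite -coef_sumXn h coef0. Qed.

Lemma poly_sumXn p n : (size p <= n)%N -> p = \sum_(k < n) p`_k *: 'X^k.
Proof.
move=> h; apply/polyP => i; rewrite coef_sum.
case: (ltnP i n) => hi.
  rewrite (bigD1 (Ordinal hi)) //= (coefZ (p`_i)) coefXn eqxx mulr1 big1 ?addr0 //.
  move=> k hk; rewrite (coefZ (p`_k)) coefXn.
  have -> : (i == k :> nat) = false.
    by apply/negbTE; move: hk; apply: contra => /eqP h'; apply/eqP/val_inj.
  by rewrite mulr0.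
rewrite nth_default ?(leq_trans h) // big1 // => k _.
rewrite (coefZ (p`_k)) coefXn.
have -> : (i == k :> nat) = false by apply/negbTE; rewrite neq_ltn; apply/orP; right; apply: leq_trans (ltn_ord k) hi.
by rewrite mulr0.
Qed.

Section Irr.
Variable f : {poly D}.
Hypothesis mf : f \is monic.
Hypothesis firr : sirreducible sigma delta f.
Implicit Types x y z u v w : {poly D}.

Lemma f0 : f != 0.
Proof. exact: monic_neq0. Qed.

Lemma Uf_sub x y : srem f x = 0 -> srem f y = 0 -> srem f (x - y) = 0.
Proof. by move=> hx hy; rewrite sremB // hx hy subrr. Qed.

Lemma Uf_lmul r x : srem f x = 0 -> srem f (sm r x) = 0.
Proof.
move/(srem_eq0P _ mf) => [h ->]; apply/(srem_eq0P _ mf).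
by exists (sm r h); rewrite smulA.
Qed.

Lemma bezout x : x != 0 -> (size x < size f)%N -> exists u v, sm u x + sm v f = 1.
Proof.
move=> x0 xs.
pose P p := exists u v, p = sm u x + sm v f.
have P0 : P 0 by exists 0, 0; rewrite !smul0l addr0.
have PB : forall a b, P a -> P b -> P (a - b).
  move=> a b [u1 [v1 ->]] [u2 [v2 ->]]; exists (u1 - u2), (v1 - v2).
  by rewrite !smulBl opprD addrACA.
have PM : forall r a, P a -> P (sm r a).
  move=> r a [u [v ->]]; exists (sm r u), (sm r v).
  by rewrite smulDr !smulA.
have Px : P x by exists 1, 0; rewrite smul1l smul0l addr0.
have [g [mg Pg sg Hg]] := minimal P0 PB PM Px x0.
have Pf : P f by exists 0, 1; rewrite smul1l smul0l add0r.
have [h eh] := (srem_eq0P _ mg).1 (Hg _ Pf).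
have g0 : g != 0 by apply: monic_neq0.
have h0 : h != 0 by apply/eqP => e; move: f0; rewrite eh e smul0l eqxx.
have [sz _] := size_smul h0 g0.
have hs : ~~ (size h < size f)%N.
  apply/negP => hh; apply: firr.2; exists h, g; split => //; split => //.
  exact: leq_ltn_trans sg xs.
have g1 : (size g <= 1)%N.
  move: hs; rewrite -leqNgt {1}eh sz.
  have : (0 < size g)%N by rewrite size_poly_gt0.
  case: (size g) => // [[|k]] // _; rewrite addnS /= -{2}[size h]addn0 leq_add2l //.
have eg : g = 1.
  have e : g = (lead_coef g)%:P.
    apply/polyP => i; rewrite coefC; case: i => [|i] /=.
      by rewrite /lead_coef; move: g1 (size_poly_gt0 g) g0; rewrite size_poly_gt0; case: (size g) => // [[|]].
    by rewrite nth_default //; apply: leq_trans g1 _.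
  by rewrite e (eqP mg).
by rewrite eg in Pg; case: Pg => u [v e]; exists u, v.
Qed.

End Irr.


Definition lsc (a : D) (p : {poly D}) : {poly D} := a *: p.
Lemma lscDr a (x y : {poly D}) : lsc a (x + y) = lsc a x + lsc a y.
Proof. exact: scalerDr. Qed.
Lemma lscDl (a b : D) (x : {poly D}) : lsc (a + b) x = lsc a x + lsc b x.
Proof. exact: scalerDl. Qed.
Lemma lscA (a b : D) (x : {poly D}) : lsc (a * b) x = lsc a (lsc b x).
Proof. by rewrite /lsc scalerA. Qed.
Lemma lsc1 (x : {poly D}) : lsc 1 x = x.
Proof. exact: scale1r. Qed.

Section Irr2.
Variable f : {poly D}.
Hypothesis mf : f \is monic.
Hypothesis firr : sirreducible sigma delta f.
Implicit Types x y z u v w : {poly D}.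

Definition Uf p := srem f p = 0.
Lemma Uf0 : Uf 0. Proof. exact: srem0. Qed.
Lemma UfB x y : Uf x -> Uf y -> Uf (x - y).
Proof. exact: Uf_sub. Qed.
Lemma UfZ a x : Uf x -> Uf (lsc a x).
Proof. by rewrite /Uf /lsc sremZ // => ->; rewrite scaler0. Qed.

Lemma K1 x y : x != 0 -> (size x < size f)%N -> (size y < size f)%N ->
  srem f (sm y x) = 0 -> y = 0.
Proof.
move=> x0 xs ys hyx; apply/eqP/negPn/negP => y0.
pose P p := srem f (sm p x) = 0.
have P0 : P 0 by rewrite /P smul0l srem0.
have PB : forall a b, P a -> P b -> P (a - b) by move=> a b ha hb; rewrite /P smulBl; apply: Uf_sub.
have PM : forall r a, P a -> P (sm r a) by move=> r a ha; rewrite /P -smulA; apply: Uf_lmul.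
have [g [mg Pg sg Hg]] := minimal P0 PB PM hyx y0.
have [u [w euw]] := bezout mf firr x0 xs.
set dg := (size g).-1.
have hsp : forall v, inspan lsc Uf (fun i : 'I_dg => sm 'X^i x) v.
  move=> v; set z := sm v u.
  have [q [eq hr]] := srem_spec z mg.
  exists (fun i => (srem g z)`_i).
  have hr' : (size (srem g z) <= dg)%N by rewrite /dg -ltnS prednK // size_poly_gt0 monic_neq0.
  have E : \sum_(k < dg) lsc (srem g z)`_k (sm 'X^k x) = sm (srem g z) x.
    by rewrite (smulE _ hr'); apply: eq_bigr => k _; rewrite smulXnl.
  rewrite E.
  have -> : v = sm z x + sm (sm v w) f by rewrite -smulA -smulA -smulDr euw smulr1.
  rewrite {1}eq smulDl addrAC addrK /Uf sremD // srem_mul // addr0.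
  by rewrite -smulA; apply: Uf_lmul.
set m := (size f).-1.
have hN : (dg < m)%N.
  rewrite /dg /m; have g0 : (0 < size g)%N by rewrite size_poly_gt0 monic_neq0.
  have h1 := leq_ltn_trans sg ys.
  have f0' : (0 < size f)%N by apply: leq_ltn_trans h1.
  by rewrite -(ltn_add2r 1) !addn1 !prednK.
have hsp2 : forall i : 'I_m, inspan lsc Uf (fun i : 'I_dg => sm 'X^i x) 'X^i by move=> i; apply: hsp.
have [c [[i ci] hU]] := steinitz lscDr lscDl lscA lsc1 UfB UfZ inv_ex hN hsp2.
have hs : (size (\sum_(k < m) c k *: 'X^k)%R < size f)%N.
  by apply: leq_ltn_trans (size_sumXn c) _; rewrite /m prednK // size_poly_gt0 f0.
move: hU; rewrite /Uf.
have -> : \sum_i lsc (c i) 'X^i = \sum_(k < m) c k *: 'X^k by [].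
rewrite srem_small // => /sumXn_eq0 /(_ i) ci0.
by rewrite ci0 eqxx in ci.
Qed.

End Irr2.


Section Irr3.
Variable f : {poly D}.
Hypothesis mf : f \is monic.
Hypothesis firr : sirreducible sigma delta f.
Implicit Types a b x y z u v w : {poly D}.

Lemma Linj_ext a z : a != 0 -> (size a < size f)%N -> srem f (sm a z) = 0 -> srem f z = 0.
Proof.
move=> a0 as0 h; rewrite -(srem_lmul _ _ mf) in h.
have [e|nz] := eqVneq (srem f z) 0 => //.
have := K1 mf firr nz (srem_size _ mf) as0 h.
by move/eqP; rewrite (negbTE a0).
Qed.

Lemma size_srem_leq g : (size (srem f g) <= (size f).-1)%N.
Proof. by rewrite -ltnS prednK ?srem_size // size_poly_gt0 f0. Qed.

Lemma span_f v : inspan lsc (Uf f) (fun i : 'I_(size f).-1 => 'X^i) v.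
Proof.
exists (fun k => (srem f v)`_k).
have -> : \sum_(k < (size f).-1) lsc (srem f v)`_k 'X^k = srem f v.
  by rewrite [RHS](poly_sumXn (size_srem_leq v)).
exact: srem_sub_eq.
Qed.

Lemma indep_f (c : 'I_(size f).-1 -> D) : Uf f (\sum_k lsc (c k) 'X^k) -> forall k, c k = 0.
Proof.
rewrite /Uf /lsc srem_small // => [/sumXn_eq0 //|].
by apply: leq_ltn_trans (size_sumXn c) _; rewrite prednK // size_poly_gt0 f0.
Qed.

Lemma Rsurj a : a != 0 -> (size a < size f)%N ->
  forall b, exists y, (size y < size f)%N /\ srem f (sm y a) = srem f b.
Proof.
move=> a0 as0 b.
pose phi y := srem f (sm (srem f y) a).
have phiD : forall x y, phi (x + y) = phi x + phi y.
  by move=> x y; rewrite /phi sremD // smulDl sremD.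
have phiZ : forall c x, phi (lsc c x) = lsc c (phi x).
  by move=> c x; rewrite /phi /lsc sremZ // smulZl sremZ.
have phiU : forall x, Uf f (phi x) -> Uf f x.
  move=> x; rewrite /Uf /phi srem_id // => h.
  exact: (K1 mf firr a0 as0 (srem_size x mf) h).
have [v hv] := inj_surj lscDr lscDl lscA lsc1 (Uf0 mf) (UfB mf) (UfZ mf) inv_ex phiD phiZ phiU
   (@span_f) (@indep_f) b.
exists (srem f v); split; first exact: srem_size.
move: hv; rewrite /Uf sremB // => /eqP; rewrite subr_eq0 => /eqP <-.
by rewrite /phi srem_id.
Qed.

End Irr3.


Lemma Ug_lmul g r x : g \is monic -> srem g x = 0 -> srem g (sm r x) = 0.
Proof.
move=> mg /(srem_eq0P _ mg) [h ->]; apply/(srem_eq0P _ mg).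
by exists (sm r h); rewrite smulA.
Qed.

Lemma size_rterm i (c : D) : (size (sm 'X^i c%:P) <= i.+1)%N.
Proof.
rewrite smulXnl; apply: leq_trans (size_iterT_leq _ _) _.
by rewrite addnC -addn1 leq_add2l size_polyC leq_b1.
Qed.

Lemma coef_rterm i (c : D) : (sm 'X^i c%:P)`_i = iter i sigma c.
Proof.
have [->|c0] := eqVneq c 0.
  by rewrite smul0r coef0; elim: i => //= i <-; rewrite rmorph0.
have cP : c%:P != 0 by rewrite polyC_eq0.
rewrite smulXnl; have [s l] := size_iterT i cP.
by move: l; rewrite lead_coefC /lead_coef s size_polyC c0 add1n.
Qed.

Lemma rind k (c : 'I_k -> D) : \sum_(i < k) sm 'X^i (c i)%:P = 0 -> forall i, c i = 0.
Proof.
elim: k c => [|k IH] c h i; first by case: i.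
move: h; rewrite big_ord_recr /= => h.
have top : c ord_max = 0.
  have := congr1 (fun p : {poly D} => p`_k) h; rewrite coef0 coefD coef_rterm.
  rewrite [X in X + _ = _]nth_default ?add0r.
    by move/eqP; apply: contraTeq => h0; apply: iter_sigma_neq0.
  apply: size_sum_leq => j _; apply: leq_trans (size_rterm _ _) _; exact: ltn_ord.
rewrite top polyC0 smul0r addr0 in h.
case: (unliftP ord_max i) => [j ->|-> //].
have e : lift ord_max j = widen_ord (leqnSn k) j by apply: val_inj; rewrite [LHS]lift_max.
by rewrite e; exact: (IH _ h j).
Qed.

Section SigSurj.
Hypothesis sigma_surj : forall b : D, exists a, sigma a = b.

Lemma iter_sigma_surj k (b : D) : exists a, iter k sigma a = b.
Proof.
elim: k b => [|k IH] b; first by exists b.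
have [a1 <-] := sigma_surj b; have [a2 <-] := IH a1; exists a2.
by rewrite iterS.
Qed.

Lemma rcoord k p : (size p <= k)%N -> exists c : 'I_k -> D, p = \sum_(i < k) sm 'X^i (c i)%:P.
Proof.
elim: k p => [|k IH] p hp.
  by exists (fun _ => 0); rewrite big_ord0; apply/eqP; rewrite -size_poly_eq0 -leqn0.
have [e he] := iter_sigma_surj k p`_k.
have hs : (size (p - sm 'X^k e%:P)%R <= k)%N.
  apply/leq_sizeP => j hj; rewrite coefB.
  move: hj; rewrite leq_eqVlt => /orP [/eqP <-|hj].
    by rewrite coef_rterm he subrr.
  have h1 : (size p <= j)%N := leq_trans hp hj.
  have h2 : (size (sm 'X^k e%:P) <= j)%N := leq_trans (size_rterm _ _) hj.
  by rewrite !nth_default ?subrr.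
have [c' hc'] := IH _ hs.
exists (fun i => if unlift ord_max i is Some j then c' j else e).
rewrite (bigD1_ord ord_max) //= unlift_none.
have -> : \sum_(i < k) sm 'X^(lift ord_max i) (if unlift ord_max (lift ord_max i) is Some j then c' j else e)%:P
   = \sum_(i < k) sm 'X^i (c' i)%:P by apply: eq_bigr => i _; rewrite liftK lift_max.
by rewrite -hc' addrC subrK.
Qed.

Definition rsc (a : D^c) (p : {poly D}) : {poly D} := sm p (a : D)%:P.
Lemma rscDr a (x y : {poly D}) : rsc a (x + y) = rsc a x + rsc a y.
Proof. exact: smulDl. Qed.
Lemma rscDl (a b : D^c) (x : {poly D}) : rsc (a + b) x = rsc a x + rsc b x.
Proof. by rewrite /rsc -smulDr -polyCD. Qed.
Lemma rscA (a b : D^c) (x : {poly D}) : rsc (a * b) x = rsc a (rsc b x).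
Proof.
rewrite /rsc -smulA smulCl; congr (sm x _).
by rewrite -mul_polyC -polyCM.
Qed.
Lemma rsc1 (x : {poly D}) : rsc 1 x = x.
Proof. exact: smulr1. Qed.
Lemma inv_c (a : D^c) : a != 0 -> exists b : D^c, b * a = 1 /\ a * b = 1.
Proof. by move=> h; have [b [h1 h2]] := inv_ex h; exists b. Qed.

Lemma Lsurj g a : g \is monic -> (forall c : D, srem g (sm g c%:P) = 0) ->
  (forall y, srem g (sm a y) = 0 -> srem g y = 0) ->
  forall w, exists v, srem g (sm a v - w) = 0.
Proof.
move=> mg SI inj w.
pose U p := srem g p = 0.
have U0 : U 0 by exact: srem0.
have UB : forall x y, U x -> U y -> U (x - y) by move=> x y hx hy; rewrite /U sremB // hx hy subrr.
have UZ : forall (c : D^c) x, U x -> U (rsc c x).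
  move=> c x /(srem_eq0P _ mg) [h ->]; rewrite /U /rsc -smulA.
  exact: Ug_lmul.
have phiD : forall x y, sm a (x + y) = sm a x + sm a y by move=> x y; rewrite smulDr.
have phiZ : forall (c : D^c) x, sm a (rsc c x) = rsc c (sm a x) by move=> c x; rewrite /rsc smulA.
have sg : (size (srem g w) <= (size g).-1)%N by rewrite -ltnS prednK ?srem_size // size_poly_gt0 monic_neq0.
have span : forall v, inspan rsc U (fun i : 'I_(size g).-1 => 'X^i) v.
  move=> v; have sv : (size (srem g v) <= (size g).-1)%N.
    by rewrite -ltnS prednK ?srem_size // size_poly_gt0 monic_neq0.
  have [c hc] := rcoord sv; exists c.
  have -> : \sum_k rsc (c k) 'X^k = srem g v by rewrite hc.
  exact: srem_sub_eq.
have indep : forall c : 'I_(size g).-1 -> D^c, U (\sum_k rsc (c k) 'X^k) -> forall k, c k = 0.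
  move=> c; rewrite /U srem_small //; first exact: rind.
  apply: (@leq_ltn_trans (size g).-1); last by rewrite prednK // size_poly_gt0 monic_neq0.
  by apply: size_sum_leq => i _; apply: leq_trans (size_rterm _ _) _.
exact: (inj_surj rscDr rscDl rscA rsc1 U0 UB UZ inv_c phiD phiZ inj span indep w).
Qed.

End SigSurj.


Lemma extract m (r : 'I_m -> {poly D}) : (forall j, size (r j) <= m)%N ->
  \sum_(j < m) r j * 'X^(m * j) = 0 -> forall j, r j = 0.
Proof.
move=> hs h j0; apply/polyP => i; rewrite coef0.
case: (ltnP i m) => hi; last by rewrite nth_default // (leq_trans (hs j0) hi).
have := congr1 (fun p : {poly D} => p`_(m * j0 + i)) h; rewrite coef0 coef_sum.
rewrite (bigD1 j0) //= coefMXn.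
have -> : (m * j0 + i < m * j0)%N = false by apply/negbTE; rewrite -leqNgt leq_addr.
rewrite addKn big1 ?addr0 // => j hj; rewrite coefMXn.
have hj' : j != j0 :> nat by [].
case: ifP => // hlt; apply: nth_default; apply: leq_trans (hs j) _.
move: hlt hj'; case: (ltngtP j j0) => // hjj hlt' _.
  have : (m + m * j <= m * j0)%N by rewrite -mulnS leq_mul2l hjj orbT.
  move: (m * j) (m * j0) => A B hAB; apply/leP; move/leP: hAB; lia.
move: hlt'; have : (m + m * j0 <= m * j)%N by rewrite -mulnS leq_mul2l hjj orbT.
move: (m * j) (m * j0) hi => A B hi' hAB /negbT; rewrite -leqNgt => hh; move/leP: hAB; move/leP: hh; move/leP: hi'; lia.
Qed.

Lemma division_of f : f \is monic -> sirreducible sigma delta f ->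
  (forall a : {poly D}, a != 0 -> (size a < size f)%N -> forall b : {poly D}, exists x, srem f (sm a x) = srem f b) ->
  Sf_division sigma delta f.
Proof.
move=> mf firr HL a as0 a0; rewrite /inSf in as0; split => b bs; rewrite /inSf in bs.
  have [x hx] := HL a a0 as0 b.
  exists (srem f x); split.
    by split; [exact: srem_size | rewrite /Sfmul srem_lmul // hx srem_small].
  move=> x' [x's hx']; rewrite /inSf in x's.
  have : srem f (sm a (srem f x - x')) = 0.
    by rewrite smulBr sremB // srem_lmul // hx; move: hx'; rewrite /Sfmul => ->; rewrite srem_small // subrr.
  have hsz : (size (srem f x - x')%R < size f)%N.
    by apply: leq_ltn_trans (size_polyB _ _) _; rewrite gtn_max x's srem_size.
  move/(Linj_ext mf firr a0 as0); rewrite srem_small //.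
  by move/eqP; rewrite subr_eq0 => /eqP.
have [x [xs hx]] := Rsurj mf firr a0 as0 b.
exists x; split; first by split => //; rewrite /Sfmul hx srem_small.
move=> x' [x's hx']; rewrite /inSf /Sfmul in x's hx'.
have : srem f (sm (x - x') a) = 0 by rewrite smulBl sremB // hx hx' srem_small // subrr.
move/(K1 mf firr a0 as0 _); rewrite /inSf => h.
apply/eqP; rewrite -subr_eq0; apply/eqP; apply: h.
by apply: leq_ltn_trans (size_polyB _ _) _; rewrite gtn_max x's xs.
Qed.

Lemma sm_Xl q : sm 'X q = T q.
Proof. by rewrite -(expr1 'X) smulXnl. Qed.

Lemma right_div g : (forall b : D, exists a, sigma a = b) -> g \is monic ->
  forall p, exists q r, p = sm g q + r /\ (size r < size g)%N.
Proof.
move=> ss mg p; have [n] := ubnP (size p); elim: n p => // n IH p hn.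
case: (ltnP (size p) (size g)) => hs; first by exists 0, p; rewrite smul0r add0r.
have g0 : g != 0 by apply: monic_neq0.
have p0 : p != 0 by rewrite -size_poly_gt0; apply: leq_trans hs; rewrite size_poly_gt0.
have [e he] := iter_sigma_surj ss (size g).-1 (lead_coef p).
have e0 : e != 0.
  apply/eqP => e0; move: he; rewrite e0.
  have -> : iter (size g).-1 sigma 0 = 0 by elim: (size g).-1 => //= k ->; rewrite rmorph0.
  by move/eqP; rewrite eq_sym lead_coef_eq0 (negbTE p0).
set k := (size p - size g)%N.
have [sh lh] := size_scale_neq0 ('X^k : {poly D}) e0.
have h0 : e *: 'X^k != 0 by rewrite -size_poly_eq0 sh size_polyXn.
have [s1 l1] := size_smul g0 h0.
have s2 : size (sm g (e *: 'X^k)) = size p.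
  by rewrite s1 sh size_polyXn addnS /= subnKC.
have l2 : lead_coef (sm g (e *: 'X^k)) = lead_coef p.
  by rewrite l1 (eqP mg) mul1r lh lead_coefXn mulr1.
have hlt := size_sub_lt p0 s2 l2.
have hlt2 : (size (p - sm g (e *: 'X^k))%R < n)%N by apply: leq_trans hlt _; rewrite -ltnS.
have [q [r [eq hr]]] := IH _ hlt2.
exists (q + e *: 'X^k), r; split => //.
by rewrite smulDr addrAC -eq subrK.
Qed.




Lemma twosided_I f : f \is monic ->
  two_sided_ideal sigma delta (fun z => forall s, srem f (sm z s) = 0).
Proof.
move=> mf; split; first by move=> s; rewrite smul0l srem0.
split; first by move=> a b ha hb s; rewrite smulDl sremD // ha hb addr0.
split; first by move=> r a ha s; rewrite -smulA; apply: Ug_lmul.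
by move=> r a ha s; rewrite -smulA.
Qed.

Lemma I_sub f : f \is monic -> forall p, (forall s, srem f (sm p s) = 0) -> lideal sigma delta f p.
Proof. by move=> mf p h; apply/(srem_eq0P _ mf); have := h 1; rewrite smulr1. Qed.

Lemma part2 f : f \is monic -> (1 < size f)%N -> sirreducible sigma delta f ->
  sbounded sigma delta f -> Sf_division sigma delta f.
Proof.
move=> mf f1 firr [fs [fs0 [hLR [hsub hmax]]]].
apply: division_of => // a a0 as0 b.
set l := lead_coef fs.
have l0 : l != 0 by rewrite lead_coef_eq0.
have ul := divD l0.
have li0 : l^-1 != 0 by apply: contraTneq ul => h; rewrite -unitrV h unitr0.
have [mg sg] := normalize fs0.
set g := l^-1 *: fs in mg sg.
have fsg : fs = sm l%:P g by rewrite smulCl /g scalerA mulrV // scale1r.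
have Lg_iff : forall p, srem g p = 0 <-> lideal sigma delta fs p.
  move=> p; split.
    by move/(srem_eq0P _ mg) => [h ->]; exists (sm h l^-1%:P); rewrite -smulA smulCl.
  by move=> [h ->]; apply/(srem_eq0P _ mg); exists (sm h l%:P); rewrite fsg smulA.
have gR : forall c, srem g (sm g c) = 0.
  move=> c; rewrite /g smulZl sremZ //.
  have : lideal sigma delta fs (sm fs c) by apply/hLR; exists c.
  by move/Lg_iff => ->; rewrite scaler0.
have Lg_sub : forall p, srem g p = 0 -> srem f p = 0.
  by move=> p /Lg_iff /hsub; move/(srem_eq0P _ mf).
have ss : forall e : D, exists a0, sigma a0 = e.
  move=> e; have [->|e0] := eqVneq e 0; first by exists 0; rewrite rmorph0.
  set d := l * e * l^-1.
  have d0 : d != 0 by rewrite /d; apply: mulD_neq0 => //; apply: mulD_neq0.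
  have : lideal sigma delta fs (sm d%:P fs) by exists d%:P.
  move/hLR => [h eh]; rewrite smulCl in eh.
  have [s1 l1] := size_scale_neq0 fs d0.
  have h0 : h != 0 by apply/eqP => h0; move: eh; rewrite h0 smul0r => /eqP; rewrite -size_poly_eq0 s1 size_poly_eq0 (negbTE fs0).
  have [s2 l2] := size_smul fs0 h0.
  have fsf : lideal sigma delta f fs by apply: hsub; exists 1; rewrite smul1l.
  have szfs : (1 < size fs)%N.
    case: fsf => h' eh'; have h'0 : h' != 0 by apply/eqP => e'; move: fs0; rewrite eh' e' smul0l eqxx.
    have [s3 _] := size_smul h'0 (monic_neq0 mf).
    have hp : (0 < size h')%N by rewrite size_poly_gt0.
    rewrite eh' s3; apply: leq_trans f1 _.
    by case: (size h') hp => // k _; rewrite addSn /= leq_addl.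
  have E : iter (size fs).-1 sigma (lead_coef h) = e.
    move: l2; rewrite -eh l1 /d -/l divrK // => E.
    by apply: (mulrI ul); rewrite -E.
  exists (iter (size fs).-2 sigma (lead_coef h)).
  by rewrite -iterS -E; case: (size fs) szfs => // [[|k]].
pose I z := forall s, srem f (sm z s) = 0.
have inj : forall y, srem g (sm a y) = 0 -> srem g y = 0.
  move=> y hy; apply/Lg_iff; apply: (hmax I (twosided_I mf) (I_sub mf)) => s.
  apply: (Linj_ext mf firr a0 as0); rewrite smulA; apply: Lg_sub.
  move/(srem_eq0P _ mg): hy => [h ->]; rewrite -smulA; apply: Ug_lmul => //; exact: gR.
have [c hc] := Lsurj ss mg (fun c => gR c%:P) inj 1.
exists (sm c b); rewrite smulA.
move/(srem_eq0P _ mg): hc => [h]; move/eqP; rewrite subr_eq => /eqP ->.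
rewrite smulDl smul1l sremD // -smulA.
by rewrite (Lg_sub _ (Ug_lmul _ mg (gR b))) add0r.
Qed.



Lemma srem_sum0 f (I : Type) (s : seq I) (P : pred I) (F : I -> {poly D}) : f \is monic ->
  (forall i, P i -> srem f (F i) = 0) -> srem f (\sum_(i <- s | P i) F i) = 0.
Proof.
move=> mf H; apply: (big_ind (fun p : {poly D} => srem f p = 0)) => //; first exact: srem0.
by move=> x y hx hy; rewrite sremD // hx hy addr0.
Qed.

Lemma SI_of f m : f \is monic -> size f = m.+1 -> (2 <= m)%N -> nucleus_is_D sigma delta f ->
  forall c : D, srem f (sm f c%:P) = 0.
Proof.
move=> mf sf m2 nuc.
  move=> c; have [_ hn] := (nuc c%:P).2 (size_polyC_leq1 c).
  case: m sf m2 => // m' sf m2.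
  have hX : inSf f 'X by rewrite /inSf size_polyX sf ltnS.
  have hXm : inSf f 'X^m' by rewrite /inSf size_polyXn sf.
  have := hn _ _ hX hXm; rewrite /Sfmul.
  have -> : sm 'X 'X^m' = 'X^(m'.+1) by rewrite sm_Xl TXn.
  have sXm : (size ('X^(m'.+1) - f)%R < size f)%N.
    have := size_sub_lt (monic_neq0 mf) (h := 'X^(m'.+1)) _ _.
    rewrite size_polyXn sf lead_coefXn (eqP mf) => /(_ erefl erefl).
    by rewrite -size_polyN opprB.
  have -> : srem f 'X^(m'.+1) = 'X^(m'.+1) - f.
    by apply: (srem_unique (q := 1)) => //; rewrite smul1l addrC subrK.
  rewrite srem_lmul // smulA sm_Xl TXn smulBl sremB //.
  move/eqP; rewrite -subr_eq0 addrC addrA addNr add0r oppr_eq0.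
  by move/eqP.
Qed.



Lemma exists_bound f m : f \is monic -> size f = m.+1 -> (forall c : D, srem f (sm f c%:P) = 0) ->
  (forall b : D, exists a, sigma a = b) ->
  exists y, y != 0 /\ forall s, srem f (sm y s) = 0.
Proof.
move=> mf sf SI ss.
pose Phi y := \sum_(j < m) srem f (sm y 'X^j) * 'X^(m * j).
have PhiD : forall x y, Phi (x + y) = Phi x + Phi y.
  move=> x y; rewrite /Phi -big_split; apply: eq_bigr => j _.
  by rewrite smulDl sremD // mulrDl.
have Phi0 : Phi 0 = 0 by rewrite /Phi big1 // => j _; rewrite smul0l srem0 // mul0r.
have PhiZ : forall (a : D) x, Phi (a *: x) = a *: Phi x.
  move=> a x; rewrite /Phi scaler_sumr; apply: eq_bigr => j _.
  by rewrite smulZl sremZ // scalerAl.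
have Phis : forall x, (size (Phi x) <= m * m)%N.
  move=> x; apply: size_sum_leq => j _; apply/leq_sizeP => i hi; rewrite coefMXn.
  case: ifP => // _; apply: nth_default.
  have hr : (size (srem f (sm x 'X^j)) <= m)%N by have := srem_size (sm x 'X^j) mf; rewrite sf.
  apply: leq_trans hr _.
  have : (m + m * j <= m * m)%N by rewrite -mulnS leq_mul2l ltn_ord orbT.
  move: (m * j) (m * m) hi => A B h1 h2; move/leP: h1; move/leP: h2 => h1 h2; apply/leP; lia.
pose U (p : {poly D}) := p = 0.
have UB : forall x y, U x -> U y -> U (x - y) by move=> x y -> ->; rewrite subrr.
have UZ : forall a x, U x -> U (lsc a x) by move=> a x ->; rewrite /lsc scaler0.
have hsp : forall l : 'I_(m * m).+1, inspan lsc U (fun i : 'I_(m * m) => 'X^i) (Phi 'X^l).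
  move=> l; exists (fun k => (Phi 'X^l)`_k).
  by rewrite /U -(poly_sumXn (Phis _)) subrr.
have [c [[i ci] hU]] := steinitz lscDr lscDl lscA lsc1 UB UZ inv_ex (ltnSn (m * m)) hsp.
set y := \sum_(l < (m * m).+1) c l *: 'X^l.
have Py : Phi y = 0.
  rewrite /y (big_morph Phi PhiD Phi0); rewrite -[RHS]hU; apply: eq_bigr => l _.
  by rewrite PhiZ.
have hr : forall j : 'I_m, srem f (sm y 'X^j) = 0.
  apply: (extract (r := fun j : 'I_m => srem f (sm y 'X^j))) => // j.
  by have := srem_size (sm y 'X^j) mf; rewrite sf.
exists y; split.
  by apply/eqP => y0; move: ci; rewrite -(coef_sumXn c i) -/y y0 coef0 eqxx.
move=> s; have [q [eq hs]] := srem_spec s mf.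
have hs' : (size (srem f s) <= m)%N by move: hs; rewrite sf.
have [d hd] := rcoord ss hs'.
rewrite eq smulDr sremD // smulA srem_mul // add0r hd.
rewrite (big_morph (sm y) (smulDr y) (smul0r y)).
apply: srem_sum0 => // j _; rewrite smulA.
have [h eh] := (srem_eq0P _ mf).1 (hr j).
by rewrite eh -smulA; apply: Ug_lmul.
Qed.

Lemma part1 f m : f \is monic -> size f = m.+1 -> (2 <= m)%N -> sirreducible sigma delta f ->
  (forall b : D, exists a, sigma a = b) -> nucleus_is_D sigma delta f ->
  sbounded sigma delta f /\ Sf_division sigma delta f.
Proof.
move=> mf sf m2 firr ss nuc.
have SI := SI_of mf sf m2 nuc.
have [y [y0 hy]] := exists_bound mf sf SI ss.
pose I z := forall s, srem f (sm z s) = 0.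
have [I0 [ID [IL IR]]] := twosided_I mf.
have IB : forall a b, I a -> I b -> I (a - b).
  by move=> a b ha hb s; rewrite smulBl sremB // ha hb subrr.
have [g [mg Ig _ Hg]] := minimal I0 IB IL hy y0.
split.
  exists g; split; first exact: monic_neq0.
  split.
    move=> p; split.
      move=> [h eh]; have Ip : I p by rewrite eh; apply: IL.
      have [q [r [er hr]]] := right_div ss mg p.
      have Ir : I r.
        have -> : r = p - sm g q by rewrite er addrC addKr.
        by apply: IB => //; apply: IR.
      have := Hg _ Ir; rewrite srem_small // => r0.
      by exists q; rewrite er r0 addr0.
    move=> [h eh]; apply/(srem_eq0P _ mg); apply: Hg.
    by rewrite eh; apply: IR.
  split.
    move=> p [h eh]; apply: I_sub => //; rewrite eh; exact: IL.
  move=> J [J0 [JD [JL JR]]] Jsub p Jp; apply/(srem_eq0P _ mg); apply: Hg => s.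
  by apply/(srem_eq0P _ mf); apply: Jsub; apply: JR.
apply: division_of => // a a0 as0 b.
have inj : forall y, srem f (sm a y) = 0 -> srem f y = 0 by move=> z; apply: Linj_ext.
have [v hv] := Lsurj ss mf SI inj b.
by exists v; move: hv; rewrite sremB // => /eqP; rewrite subr_eq0 => /eqP.
Qed.



End Base.

Unset Implicit Arguments.
Set Strict Implicit.

Theorem mainTheorem10 (D : unitRingType) (sigma : {rmorphism D -> D})
  (delta : {additive D -> D}) (f : {poly D}) (m : nat) :
  division_ring D ->
  left_sigma_derivation sigma delta ->
  f \is monic -> size f = m.+1 -> (2 <= m)%N ->
  sirreducible sigma delta f ->
  ((forall b : D, exists a : D, sigma a = b) ->
     nucleus_is_D sigma delta f ->
     sbounded sigma delta f /\ Sf_division sigma delta f) /\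
  (sbounded sigma delta f -> Sf_division sigma delta f).
Proof.
move=> divD derD mf sf m2 firr; split.
  by move=> ss nuc; exact: (part1 divD derD mf sf m2 firr ss nuc).
move=> hb; apply: (part2 divD derD mf _ firr hb).
by rewrite sf ltnS; apply: leq_trans m2.
Qed.
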